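(* Let $C_\bullet(L)$ be the chain complex with $C_n(L)=\mathrm{id}_L\otimes_R B_+^{\otimes_R n}\otimes_R\mathrm{id}_L$ and differential $d(a_1\otimes\cdots\otimes a_n)=\sum_{i=1}^{n-1}(-1)^i a_1\otimes\cdots\otimes a_ia_{i+1}\otimes\cdots\otimes a_n$, and let $C_\bullet^{(m)}(L)$ be its subcomplex spanned by tensors of internal degree $m$. Then for all $n\ge1$: $H_n(C_\bullet^{(n)}(L))=0$; $H_n(C_\bullet^{(n-1)}(L))\cong k$ if $n\in\{3,4\}$ and $0$ otherwise; $H_n(C_\bullet^{(n-2)}(L))\cong k$ if $n\in\{7,8\}$ and $0$ otherwise; $H_n(C_\bullet^{(n-3)}(L))\cong k$ if $n\in\{11,12\}$ and $0$ otherwise.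
   Context: Let $k$ be a field with $\operatorname{char}k\neq2,3$. Let $B$ be the graded $k$-algebra with $k$-basis $\mathrm{id}_L,\mathrm{id}_{\mathcal O},\theta$ (degree $0$) and $\eta,\xi,\xi_L$ (degree $1$), whose only nonzero products of basis elements are $\mathrm{id}_L\mathrm{id}_L=\mathrm{id}_L$, $\mathrm{id}_{\mathcal O}\mathrm{id}_{\mathcal O}=\mathrm{id}_{\mathcal O}$, $\mathrm{id}_L\xi_L=\xi_L\mathrm{id}_L=\xi_L$, $\mathrm{id}_{\mathcal O}\xi=\xi\mathrm{id}_{\mathcal O}=\xi$, $\mathrm{id}_L\eta=\eta\,\mathrm{id}_{\mathcal O}=\eta$, $\mathrm{id}_{\mathcal O}\theta=\theta\,\mathrm{id}_L=\theta$, $\theta\eta=\xi$, $\eta\theta=\xi_L$. Let $R=k\langle\mathrm{id}_L,\mathrm{id}_{\mathcal O}\rangle$ and $B_+=\langle\theta,\eta,\xi,\xi_L\rangle$, so $B=R\oplus B_+$; tensor products are over $R$. Thus $B_+^{\otimes_R n}$ has $k$-basis the words $a_1\otimes\cdots\otimes a_n$, $a_i\in\{\theta,\eta,\xi,\xi_L\}$, with the right idempotent of $a_i$ equal to the left idempotent of $a_{i+1}$, where (left, right) idempotents are $\theta:(\mathrm{id}_{\mathcal O},\mathrm{id}_L)$, $\eta:(\mathrm{id}_L,\mathrm{id}_{\mathcal O})$, $\xi:(\mathrm{id}_{\mathcal O},\mathrm{id}_{\mathcal O})$, $\xi_L:(\mathrm{id}_L,\mathrm{id}_L)$; $\mathrm{id}_L\otimes_R(\cdot)\otimes_R\mathrm{id}_L$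 selects words whose first letter has left idempotent $\mathrm{id}_L$ and last letter right idempotent $\mathrm{id}_L$. The internal degree of a word is the sum of the degrees of its letters; $d$ preserves it. *)

(* Defs.v *)
From HB Require Import structures.
From mathcomp Require Import all_boot all_order all_algebra.
Set Implicit Arguments. Unset Strict Implicit. Unset Printing Implicit Defensive.
Import GRing.Theory.
Local Open Scope ring_scope.

(* The four basis letters of B_+ : theta, eta, xi, xi_L *)
Inductive letter := th | et | xi | xiL.

Definition letter_to_ord (a : letter) : 'I_4 :=
  match a with th => inord 0 | et => inord 1 | xi => inord 2 | xiL => inord 3 end.
Definition ord_to_letter (i : 'I_4) : letter :=
  match val i with 0 => th | 1 => et | 2 => xi | _ => xiL end%N.
Lemma letterK : cancel letter_to_ord ord_to_letter.
Proof. by case; rewrite /ord_to_letter /= inordK. Qed.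
HB.instance Definition _ := Finite.copy letter (can_type letterK).

(* the two idempotents id_L, id_O *)
Inductive idem := IL | IO.
Definition idem_eqb (x y : idem) := match x, y with IL, IL | IO, IO => true | _, _ => false end.

Definition lidem (a : letter) : idem :=
  match a with th => IO | et => IL | xi => IO | xiL => IL end.
Definition ridem (a : letter) : idem :=
  match a with th => IL | et => IO | xi => IO | xiL => IL end.

Definition ldeg (a : letter) : nat := match a with th => 0 | _ => 1 end%N.

(* product in B_+ of two basis letters: theta*eta = xi, eta*theta = xi_L, others 0 *)
Definition lmul (a b : letter) : option letter :=
  match a, b with th, et => Some xi | et, th => Some xiL | _, _ => None end.

(* words in id_L (x) B_+^{(x) n} (x) id_L : composable, starting and ending at id_L *)
Definition adm (s : seq letter) : bool :=
  match s with
  | [::] => true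
  | a :: s' => [&& idem_eqb (lidem a) IL,
                  path (fun x y => idem_eqb (ridem x) (lidem y)) a s'
                & idem_eqb (ridem (last a s')) IL]
  end.

Definition wdeg (s : seq letter) : nat := (\sum_(a <- s) ldeg a)%N.

(* basis of C_n^{(m)}(L) : admissible words of length n and internal degree m *)
Definition Wd (n : nat) (m : int) :=
  {w : n.-tuple letter | adm w && ((wdeg w)%:Z == m)}.

Definition C (K : fieldType) (n : nat) (m : int) : vectType K := {ffun Wd n m -> K^o}.

(* multiply the letters at 0-based positions j, j+1 (if the product is nonzero) *)
Definition contract (s : seq letter) (j : nat) : option (seq letter) :=
  match lmul (nth th s j) (nth th s j.+1) with
  | Some c => Some (take j s ++ c :: drop j.+2 s)
  | None => None
  end.

(* d(a_1..a_n) = sum_{i=1}^{n-1} (-1)^i a_1..(a_i a_{i+1})..a_n, written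
   coordinatewise; 0-based j = i - 1 *)
Definition d_fun (K : fieldType) (n : nat) (m : int) (f : C K n m) : C K n.-1 m :=
  [ffun v : Wd n.-1 m =>
     \sum_(w : Wd n m) \sum_(j < n.-1 | contract (val (val w)) j == Some (val (val v)))
        ((-1) ^+ j.+1 : K) *: f w].

Definition d (K : fieldType) (n : nat) (m : int) : 'Hom(C K n m, C K n.-1 m) :=
  linfun (@d_fun K n m).

(* dimension of H_n(C^{(m)}) = ker d_n / (im d_{n+1} /\ ker d_n) *)
Definition hdim (K : fieldType) (n : nat) (m : int) : nat :=
  (\dim (lker (d K n m)) - \dim ((limg (d K n.+1 m) :&: lker (d K n m))%VS))%N.

(* Main.v *)
Require Import Defs.
From HB Require Import structures.
From mathcomp Require Import all_boot all_order all_algebra.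
From mathcomp Require Import ring.

Import GRing.Theory.
Local Open Scope ring_scope.

Section Model.
Context {K : fieldType}.
Implicit Types (f g : seq bool -> K) (w v u : seq bool).

Fixpoint Dp f v : K := match v with
  | [::] => 0
  | x :: v' => (if x then - f [:: false, false & v'] else 0) - Dp (fun u => f (x :: u)) v'
  end.

Lemma Dp_ext f g v : (forall u, f u = g u) -> Dp f v = Dp g v.
Proof. elim: v f g => [|x v IH] f g H //=; rewrite H (IH _ (fun u => g (x :: u))) //. Qed.

Lemma Dp_add f g v : Dp (fun u => f u + g u) v = Dp f v + Dp g v.
Proof.
elim: v f g => [|x v IH] f g /=; first by rewrite addr0.
rewrite (IH (fun u => f (x :: u)) (fun u => g (x :: u))).
case: x; rewrite ?opprD; ring.
Qed.

Lemma Dp_opp f v : Dp (fun u => - f u) v = - Dp f v.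
Proof.
elim: v f => [|x v IH] f /=; first by rewrite oppr0.
rewrite (IH (fun u => f (x :: u))); case: x; ring.
Qed.

Lemma Dp_zero f v : (forall u, f u = 0) -> Dp f v = 0.
Proof.
elim: v f => [|x v IH] f H //=; rewrite (IH (fun u => f (x :: u))) // H; case: x; ring.
Qed.

Definition rho f v := f [:: false, true & v] + f [:: true, false & v].

Fixpoint S f w : K := match w with
  | false :: false :: u => - f (true :: u)
  | false :: true :: v => S (rho f) v
  | _ => 0 end.

Fixpoint Pi f w : K := match w with
  | [::] => f [::]
  | [:: false] => f [:: false]
  | false :: true :: v => Pi (rho f) v
  | _ => 0 end.

Lemma S_ext f g w : (forall u, f u = g u) -> S f w = S g w.
Proof.
move: {2}(size w) (leqnn (size w)) => k; elim: k w f g => [|k IH] w f g Hs H.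
  by case: w Hs.
case: w Hs => [|[] [|[] w]] //= Hs; try by rewrite H.
apply: IH; first by rewrite -ltnS ltnW.
by move=> u; rewrite /rho !H.
Qed.

Lemma Pi_ext f g w : (forall u, f u = g u) -> Pi f w = Pi g w.
Proof.
move: {2}(size w) (leqnn (size w)) => k; elim: k w f g => [|k IH] w f g Hs H.
  by case: w Hs => //= _; rewrite H.
case: w Hs => [|[] [|[] w]] //= Hs; rewrite ?H //.
apply: IH; first by rewrite -ltnS ltnW.
by move=> u; rewrite /rho !H.
Qed.

Lemma S_zero f w : (forall u, f u = 0) -> S f w = 0.
Proof.
move: {2}(size w) (leqnn (size w)) => k; elim: k w f => [|k IH] w f Hs H.
  by case: w Hs.
case: w Hs => [|[] [|[] w]] //= Hs; rewrite ?H ?oppr0 //.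
apply: IH; first by rewrite -ltnS ltnW.
by move=> u; rewrite /rho !H addr0.
Qed.

Lemma rho_Dp f v : rho (Dp f) v = Dp (rho f) v.
Proof.
rewrite /rho /= (Dp_add (fun u => f [:: false, true & u]) (fun u => f [:: true, false & u])).
ring.
Qed.

Lemma main_id f w : f w = Pi f w + Dp (S f) w + S (Dp f) w.
Proof.
move: {2}(size w) (leqnn (size w)) => k; elim: k w f => [|k IH] w f Hs.
  by case: w Hs => //= _; rewrite !addr0.
case: w Hs => [|[] [|[] w]] //= Hs; rewrite ?(Dp_zero (fun=> 0)) //; try ring.
- rewrite (S_ext (rho (Dp f)) (Dp (rho f))); last exact: rho_Dp.
  have H := IH w (rho f) (ltnW Hs); rewrite /rho in H.
  have -> : f [:: false, true & w] = (f [:: false, true & w] + f [:: true, false & w]) - f [:: true, false & w] by ring.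
  rewrite H (Dp_ext [eta S (rho f)] (S (rho f))) //. ring.
- rewrite Dp_opp; ring.
Qed.

Lemma Pi_Dp f w : Pi (Dp f) w = 0.
Proof.
move: {2}(size w) (leqnn (size w)) => k; elim: k w f => [|k IH] w f Hs.
  by case: w Hs.
case: w Hs => [|[] [|[] w]] //= Hs.
- ring.
rewrite (Pi_ext (rho (Dp f)) (Dp (rho f))); last exact: rho_Dp.
apply: IH; exact: ltnW.
Qed.

Fixpoint wt (e : seq bool) : nat := match e with [::] => 0 | b :: e' => (if b then 2 else 1) + wt e' end%N.

Fixpoint rep (k : nat) : seq bool := match k with
  | 0 => [::] | 1 => [:: false] | k'.+2 => [:: false, true & rep k'] end%N.

Fixpoint has11 (u : seq bool) : bool := match u with
  | false :: false :: _ => true | _ :: u' => has11 u' | [::] => false end.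

Lemma has11_cons x u : has11 u -> has11 (x :: u).
Proof. by case: x; case: u => [|[] u]. Qed.

Lemma Dp_has11 f w : (forall u, has11 u -> f u = 0) -> Dp f w = 0.
Proof.
elim: w f => [|x w IH] f H //=.
rewrite IH; last by move=> u Hu; apply: H; apply: has11_cons.
by case: x; rewrite ?H //; ring.
Qed.

Lemma rep_no11 k : has11 (rep k) = false.
Proof.
move: {2}k (leqnn k) => j; elim: j k => [|j IH] [|[|k]] //= Hk.
by rewrite IH // -ltnS ltnW.
Qed.

Lemma size_rep k : size (rep k) = k.
Proof.
move: {2}k (leqnn k) => j; elim: j k => [|j IH] [|[|k]] //= Hk.
by rewrite IH // -ltnS ltnW.
Qed.

Lemma wt_rep k : wt (rep k) = (k + k./2)%N.
Proof.
move: {2}k (leqnn k) => j; elim: j k => [|j IH] [|[|k]] //= Hk.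
rewrite IH; last by rewrite -ltnS ltnW.
by rewrite !addnS !addSn.
Qed.

Lemma Pi_rep0 f w : w != rep (size w) -> Pi f w = 0.
Proof.
move: {2}(size w) (leqnn (size w)) => k; elim: k w f => [|k IH] w f Hs.
  by case: w Hs.
case: w Hs => [|[] [|[] w]] //= Hs Hn.
apply: IH; first by rewrite -ltnS ltnW.
by move: Hn; apply: contra => /eqP {1}->.
Qed.

Lemma Pi_delta k : Pi (fun u => (u == rep k)%:R) (rep k) = 1.
Proof.
move: {2}k (leqnn k) => j; elim: j k => [|j IH] [|[|k]] //= Hk; rewrite ?eqxx //.
rewrite -[RHS](IH k); last by rewrite -ltnS ltnW.
by apply: Pi_ext => u; rewrite /rho !eqseq_cons /= addr0.
Qed.

Lemma Dp_supp f g e : (forall u, size u = (size e).+1 -> wt u = wt e -> f u = g u) ->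
  Dp f e = Dp g e.
Proof.
elim: e f g => [|x e IH] f g H //=.
rewrite (IH (fun u => f (x :: u)) (fun u => g (x :: u))); last first.
  by move=> u /= Hu Hw; apply: H => /=; rewrite ?Hu ?Hw.
by case: x H => H //; rewrite H.
Qed.

Definition split (e : seq bool) (j : nat) := take j e ++ [:: false, false & drop j.+1 e].

Lemma Dp_sum f e : Dp f e =
  \sum_(0 <= j < size e) (if nth false e j then (-1) ^+ j.+1 * f (split e j) else 0).
Proof.
elim: e f => [|x e IH] f /=; first by rewrite big_geq.
rewrite big_nat_recl // IH /= expr1.
rewrite [X in _ = _ + X](_ : _ = - \sum_(0 <= i < size e)
   (if nth false e i then (-1) ^+ i.+1 * f (x :: split e i) else 0)); last first.
  rewrite -sumrN; apply: eq_bigr => i _; case: ifP => _; last by rewrite oppr0.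
  by rewrite exprS mulN1r mulNr.
by case: x; rewrite /split /= ?mulN1r ?drop0.
Qed.
End Model.

Definition part (a : letter) : bool := match a with xi | xiL => true | _ => false end.
Definition enc (s : seq letter) := map part s.
Definition flip (i : idem) := match i with IL => IO | IO => IL end.
Definition letter_of (i : idem) (b : bool) := match i, b with
  | IL, false => et | IL, true => xiL | IO, false => th | IO, true => xi end.
Definition nexti (i : idem) (b : bool) := if b then i else flip i.
Fixpoint dec (i : idem) (e : seq bool) : seq letter := match e with
  | [::] => [::] | b :: e' => letter_of i b :: dec (nexti i b) e' end.
Fixpoint chain (i : idem) (s : seq letter) : bool := match s with
  | [::] => true | a :: s' => idem_eqb (lidem a) i && chain (ridem a) s' end.
Fixpoint endi (i : idem) (s : seq letter) : idem := match s with
  | [::] => i | a :: s' => endi (ridem a) s' end.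
Definition pot (i : idem) : nat := match i with IL => 1 | IO => 0 end%N.

Lemma enc_dec i e : enc (dec i e) = e.
Proof. by elim: e i => [|b e IH] [] //=; case: b; rewrite IH. Qed.

Lemma chain_dec i e : chain i (dec i e).
Proof. by elim: e i => [|b e IH] [] //=; case: b; rewrite IH. Qed.

Lemma dec_enc i s : chain i s -> dec i (enc s) = s.
Proof. by elim: s i => [|a s IH] [] //=; case: a => //= /IH ->. Qed.

Lemma size_dec i e : size (dec i e) = size e.
Proof. by elim: e i => [|b e IH] i //=; rewrite IH. Qed.

Lemma endi_dec i e : endi i (dec i e) = if odd (wt e) then flip i else i.
Proof.
elim: e i => [|b e IH] i //=; case: b; case: i; rewrite IH //=;
  by case: (odd (wt e)).
Qed.

Lemma wdeg_cons a s : wdeg (a :: s) = (ldeg a + wdeg s)%N.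
Proof. by rewrite /wdeg big_cons. Qed.

Lemma wdeg_chain i s : chain i s -> (2 * wdeg s + pot (endi i s) = wt (enc s) + pot i)%N.
Proof.
rewrite /wdeg; elim: s i => [|a s IH] i /=; first by rewrite big_nil addnC.
rewrite big_cons => /andP [H1 /IH]; rewrite mulnDr -addnA => ->.
by case: a H1; case: i => //= _; ring.
Qed.

Lemma endi_last a s : endi (ridem a) s = ridem (last a s).
Proof. by elim: s a => [|b s IH] a //=. Qed.

Lemma idem_eqb_sym x y : idem_eqb x y = idem_eqb y x.
Proof. by case: x; case: y. Qed.

Lemma path_chain a s :
  path (fun x y => idem_eqb (ridem x) (lidem y)) a s = chain (ridem a) s.
Proof. by elim: s a => [|b s IH] a //=; rewrite IH idem_eqb_sym. Qed.

Lemma adm_chain s : adm s = chain IL s && idem_eqb (endi IL s) IL.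
Proof.
case: s => [|a s] //=.
by rewrite path_chain endi_last -andbA; case: (lidem a).
Qed.

Definition encW {n m} (v : Wd n m) : seq bool := enc (val (val v)).

Lemma encW_size {n m} (v : Wd n m) : size (encW v) = n.
Proof. by rewrite /encW size_map size_tuple. Qed.

Lemma Wd_chain {n m} (v : Wd n m) : chain IL (val (val v)).
Proof. by case: v => /= t /andP []; rewrite adm_chain => /andP []. Qed.

Lemma encW_wt {n M} (v : Wd n M%:Z) : wt (encW v) = (2 * M)%N.
Proof.
rewrite /encW; case: v => t /= /andP []; rewrite adm_chain => /andP [Hc He] /eqP [] <-.
have := @wdeg_chain _ _ Hc; move: He; case: (endi IL t) => //= _.
by move=> /eqP; rewrite eqn_add2r => /eqP.
Qed.

Lemma encW_inj {n m} (v1 v2 : Wd n m) : encW v1 = encW v2 -> v1 = v2.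
Proof.
move=> H; apply: val_inj; apply: val_inj.
by rewrite -(@dec_enc _ _ (Wd_chain v1)) -(@dec_enc _ _ (Wd_chain v2)); congr dec.
Qed.

Lemma encW_surj n M e : size e = n -> wt e = (2 * M)%N ->
  exists v : Wd n M%:Z, encW v = e.
Proof.
move=> Hs Hw.
have Ht : size (dec IL e) == n by rewrite size_dec Hs.
have Hp : adm (Tuple Ht) && ((wdeg (Tuple Ht))%:Z == M%:Z).
  rewrite adm_chain /= chain_dec endi_dec Hw oddM /=.
  have := @wdeg_chain _ _ (chain_dec IL e); rewrite endi_dec Hw oddM enc_dec Hw /=.
  by move/eqP; rewrite eqn_add2r eqn_mul2l /= => /eqP ->.
by exists (exist _ (Tuple Ht) Hp); rewrite /encW /= enc_dec.
Qed.

Lemma contract_cons a W j : contract (a :: W) j.+1 = omap (cons a) (contract W j).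
Proof. by rewrite /contract /=; case: lmul. Qed.

Lemma contract_split W V j : (j.+1 < size W)%N -> contract W j = Some V ->
  nth false (enc V) j && (enc W == split (enc V) j).
Proof.
elim: j W V => [|j IH] W V Hs.
  case: W Hs => [|a [|b W]] //= Hs.
  rewrite /contract /=; case: a; case: b => //= -[<-] /=; by rewrite drop0 /split /= drop0.
case: W Hs => [|b W] //= Hs.
rewrite contract_cons; case E: (contract W j) => [V'|] //= [<-] /=.
have /andP [H1 /eqP H2] := IH _ _ Hs E.
by rewrite H1 H2 /split /=.
Qed.

Lemma contract_dec i e j : (j < size e)%N -> nth false e j ->
  contract (dec i (split e j)) j = Some (dec i e).
Proof.
elim: j i e => [|j IH] i [|b e] //= Hs Hb.
  by case: b Hb => // _; rewrite /split /= drop0; case: i; rewrite /contract /= drop0.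
rewrite contract_cons.
have -> : take j e ++ [:: false, false & drop j.+1 e] = split e j by [].
by rewrite IH.
Qed.

Lemma contract_iff i W V j : chain i W -> chain i V -> (j.+1 < size W)%N ->
  (contract W j == Some V) = nth false (enc V) j && (enc W == split (enc V) j).
Proof.
move=> HW HV Hs; apply/idP/idP; first by move/eqP; exact: contract_split.
case/andP=> Hn /eqP He.
have Hj : (j < size (enc V))%N.
  by rewrite ltnNge; apply/negP => Hle; move: Hn; rewrite nth_default.
by rewrite -(@dec_enc _ _ HW) -(@dec_enc _ _ HV) He contract_dec.
Qed.

Section Vec.
Variable K : fieldType.

Definition toF {n m} (x : C K n m) (w : seq bool) : K :=
  \sum_(v : Wd n m | encW v == w) x v.
Definition ofF {n m} (f : seq bool -> K) : C K n m := [ffun v => f (encW v)].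

Lemma toF_encW {n m} (x : C K n m) v : toF x (encW v) = x v.
Proof.
rewrite /toF (big_pred1 v) // => v'; apply/eqP/eqP => [/encW_inj|->] //.
Qed.

Lemma toF_supp {n M} (x : C K n M%:Z) w :
  ~~ ((size w == n) && (wt w == 2 * M)%N) -> toF x w = 0.
Proof.
move=> H; rewrite /toF big_pred0 // => v; apply/negP => /eqP E; move: H.
by rewrite -E encW_size encW_wt !eqxx.
Qed.

Lemma toF_ofF {n M} f w : size w = n -> wt w = (2 * M)%N ->
  toF (ofF f : C K n M%:Z) w = f w.
Proof.
move=> Hs Hw; have [v <-] := @encW_surj n M w Hs Hw.
by rewrite toF_encW ffunE.
Qed.

Lemma toF0 {n m} w : toF (0 : C K n m) w = 0.
Proof. by rewrite /toF big1 // => v _; rewrite ffunE. Qed.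

Lemma d_fun_lin n m : linear (@d_fun K n m).
Proof.
move=> a x y; apply/ffunP => v; rewrite !ffunE scaler_sumr -big_split.
apply: eq_bigr => w _; rewrite scaler_sumr -big_split; apply: eq_bigr => j _.
by rewrite !ffunE scalerDr !scalerA mulrC.
Qed.

Lemma dE n m (x : C K n m) : d K n m x = d_fun x.
Proof.
pose fL : {linear _ -> _} := HB.pack (@d_fun K n m) (GRing.isLinear.Build _ _ _ _ _ (d_fun_lin n m)).
exact: (lfunE fL x).
Qed.

Lemma d_bridge {n M} (x : C K n.+1 M%:Z) (v : Wd n M%:Z) :
  d K n.+1 M%:Z x v = Dp (toF x) (encW v).
Proof.
rewrite dE /d_fun ffunE Dp_sum encW_size big_mkord.
rewrite (exchange_big_dep xpredT) //=.
apply: eq_bigr => j _.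
have Hiff (w : Wd n.+1 M%:Z) : (contract (val (val w)) j == Some (val (val v))) =
    nth false (encW v) j && (encW w == split (encW v) j).
  apply: (@contract_iff IL); [exact: Wd_chain | exact: Wd_chain | by rewrite size_tuple ltnS].
case: ifP => Hn.
  rewrite /toF mulr_sumr; apply: eq_big => [w|w _] //.
  by rewrite Hiff Hn.
rewrite big_pred0 // => w; by rewrite Hiff Hn.
Qed.
End Vec.
Arguments toF {K n m}. Arguments ofF {K n m}.
Section Hom.
Variables (K : fieldType) (V0 V1 V2 : vectType K) (d1 : 'Hom(V1,V0)) (d2 : 'Hom(V2,V1)).

Lemma hd0 : (forall x, d1 x = 0 -> exists y, x = d2 y) ->
  (\dim (lker d1) - \dim ((limg d2 :&: lker d1)%VS))%N = 0%N.
Proof.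
move=> H; apply/eqP; rewrite subn_eq0; apply: dimvS; apply/subvP => x Hx.
rewrite memv_cap Hx andbT; move: Hx; rewrite memv_ker => /eqP /H [y ->].
exact: memv_img (memvf y).
Qed.

Lemma hd1 z : d1 z = 0 -> (forall y, d2 y != z) ->
  (forall x, d1 x = 0 -> exists c y, x = d2 y + c *: z) ->
  (\dim (lker d1) - \dim ((limg d2 :&: lker d1)%VS))%N = 1%N.
Proof.
move=> Hz Hn H.
set I := (limg d2 :&: lker d1)%VS.
have E : lker d1 = (I + <[z]>)%VS.
  apply/eqP; rewrite eqEsubv; apply/andP; split.
    apply/subvP => x Hx; have /H [c [y Ex]] : d1 x = 0 by apply/eqP; rewrite -memv_ker.
    rewrite Ex; apply: memv_add; last by rewrite memvZ // memv_line.
    rewrite memv_cap (memv_img _ (memvf y)) /= memv_ker.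
    have -> : d2 y = x - c *: z by rewrite Ex addrK.
    by rewrite linearB linearZ /= Hz scaler0 subr0 -memv_ker.
  by rewrite subv_add capvSr /= -memvE memv_ker Hz.
have Hz0 : z != 0 by apply: contraNneq (Hn 0) => ->; rewrite linear0.
have I0 : (I :&: <[z]> = 0)%VS.
  apply/eqP; rewrite -subv0; apply/subvP => w; rewrite memv_cap memv0 => /andP [].
  rewrite memv_cap => /andP [/memv_imgP [y _ ->] _] /vlineP [k Hk].
  case: (eqVneq k 0) => k0; first by rewrite Hk k0 scale0r.
  by move: (Hn (k^-1 *: y)); rewrite linearZ /= Hk scalerA mulVf // scale1r eqxx.
have := dimv_sum_cap I <[z]>; rewrite -E I0 dimv0 addn0 dim_vline Hz0 => ->.
by rewrite addKn.
Qed.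
End Hom.

Lemma toF_d (K : fieldType) n M (x : C K n.+1 M%:Z) w :
  toF (d K n.+1 M%:Z x) w = Dp (toF x) w.
Proof.
case: (boolP ((size w == n) && (wt w == 2 * M)%N)) => [/andP [/eqP Hs /eqP Hw] | H].
  by have [v <-] := @encW_surj n M w Hs Hw; rewrite toF_encW d_bridge.
rewrite toF_supp // (@Dp_supp _ _ (fun _ => 0)) ?Dp_zero // => u Hu Hw.
apply: toF_supp; rewrite Hu Hw eqSS; exact: H.
Qed.

Lemma decomp (K : fieldType) n M (x : C K n.+1 M%:Z) : d K n.+1 M%:Z x = 0 ->
  forall v, x v = Pi (toF x) (encW v) + d K n.+2 M%:Z (ofF (S (toF x))) v.
Proof.
move=> Hx v; rewrite -[LHS]toF_encW (main_id (toF x) (encW v)).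
rewrite (S_ext (Dp (toF x)) (fun _ => 0)) ?S_zero ?addr0 //; last first.
  by move=> u; rewrite -toF_d Hx toF0.
congr (_ + _); rewrite d_bridge; apply: Dp_supp => u Hu Hw.
by rewrite toF_ofF // ?Hu ?Hw ?encW_size ?encW_wt.
Qed.

Lemma toF_delta (K : fieldType) n M u : wt (rep n) = (2 * M)%N ->
  toF (ofF (fun u => ((u == rep n)%:R : K)) : C K n M%:Z) u = (u == rep n)%:R.
Proof.
move=> Hr; case: (boolP ((size u == n) && (wt u == 2 * M)%N)) => [/andP [/eqP Hs /eqP Hw] | H].
  by rewrite toF_ofF.
by rewrite toF_supp //; case: eqP => // Eu; move: H; rewrite Eu size_rep Hr !eqxx.
Qed.
From mathcomp Require Import zify.

Lemma hdim_main (K : fieldType) n t : (0 < n)%N -> (t <= n)%N ->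
  hdim K n (n - t)%N%:Z = (if (n./2 + 2 * t == n)%N then 1 else 0)%N.
Proof.
case: n => // n _ Ht; set M := (n.+1 - t)%N.
have wtrep : (wt (rep n.+1) == 2 * M)%N = (n.+1./2 + 2 * t == n.+1)%N.
  rewrite wt_rep /M; move: (n.+1./2) => h; apply/eqP/eqP; lia.
rewrite /hdim; case: ifP => Hc.
  pose z : C K n.+1 M%:Z := ofF (fun u => ((u == rep n.+1)%:R : K)).
  have Hr : wt (rep n.+1) = (2 * M)%N by apply/eqP; rewrite wtrep.
  apply: (@hd1 _ _ _ _ _ _ z).
  - apply/ffunP => v; rewrite ffunE d_bridge Dp_has11 // => u Hu.
    by rewrite toF_delta //; case: eqP Hu => // ->; rewrite rep_no11.
  - move=> y; apply/negP => /eqP E.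
    have := Pi_Dp (toF y) (rep n.+1).
    rewrite (Pi_ext (Dp (toF y)) (toF (d K n.+2 M%:Z y))); last by move=> u; rewrite toF_d.
    rewrite E (Pi_ext _ (fun u => ((u == rep n.+1)%:R : K))); last by move=> u; rewrite toF_delta.
    by rewrite Pi_delta => /eqP; rewrite oner_eq0.
  - move=> x Hx; exists (Pi (toF x) (rep n.+1)), (ofF (S (toF x))).
    apply/ffunP => v; rewrite (@decomp K n M x Hx) !ffunE addrC; congr (_ + _).
    case: (eqVneq (encW v) (rep n.+1)) => [->|ne]; first exact/esym/mulr1.
    rewrite Pi_rep0; first exact/esym/mulr0.
    by rewrite encW_size.
apply: hd0 => x Hx; exists (ofF (S (toF x))).
apply/ffunP => v; rewrite (@decomp K n M x Hx) Pi_rep0 ?add0r // encW_size.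
by apply/eqP => E; move: Hc; rewrite -wtrep -E encW_wt eqxx.
Qed.

Lemma hdim_neg (K : fieldType) n t : (n < t)%N -> hdim K n (n%:Z - t%:Z) = 0%N.
Proof.
move=> Hnt; rewrite /hdim; apply: hd0 => x _; exists 0; rewrite linear0.
apply/ffunP => v; exfalso; case: v => w /andP [_ /eqP E]; lia.
Qed.

Lemma key (K : fieldType) n t : (0 < n)%N ->
  hdim K n (n%:Z - t%:Z) = (if (n./2 + 2 * t == n)%N then 1 else 0)%N.
Proof.
move=> Hn; case: (leqP t n) => Ht; first by rewrite subzn // hdim_main.
rewrite hdim_neg //; case: eqP => //; lia.
Qed.

Theorem mainTheorem2 (K : fieldType) (h2 : 2%N \notin [pchar K]) (h3 : 3%N \notin [pchar K]) :
  forall n : nat, (0 < n)%N ->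
    [/\ hdim K n (n%:Z) = 0%N,
        hdim K n (n%:Z - 1) = (if n \in [:: 3; 4]%N then 1 else 0)%N,
        hdim K n (n%:Z - 2) = (if n \in [:: 7; 8]%N then 1 else 0)%N
      & hdim K n (n%:Z - 3) = (if n \in [:: 11; 12]%N then 1 else 0)%N].
Proof.
move=> n Hn.
have E0 : hdim K n n%:Z = hdim K n (n%:Z - 0%:Z) by rewrite subr0.
rewrite E0 !(key K n _ Hn); clear E0.
case: (ltnP n 13) => Hn13.
  move: Hn Hn13; case: n => // n _.
  do 12 (case: n => [|n]; first by move=> _; split; reflexivity).
  by case: n.
have E := odd_double_half n.
have F t : (t <= 3)%N -> (n./2 + 2 * t == n)%N = false.
  move=> Ht; apply/eqP; move: E; case: (odd n) => /= E; lia.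
rewrite !F // !inE.
have -> : (n == 3) = false by apply/eqP; lia.
have -> : (n == 4) = false by apply/eqP; lia.
have -> : (n == 7) = false by apply/eqP; lia.
have -> : (n == 8) = false by apply/eqP; lia.
have -> : (n == 11) = false by apply/eqP; lia.
by have -> : (n == 12) = false by apply/eqP; lia.
Qed.
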